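(* Let $\widetilde{\mathcal{A}}^+,\widetilde{\mathcal{A}}^-\subseteq\mathbb{R}^d$ be compact and linearly separable, with $$\tilde d:=\max_{\|y\|_*\le1,\ b\in\mathbb{R}} h(y,b;\widetilde{\mathcal{A}}^+,\widetilde{\mathcal{A}}^-)>0,$$ and let $(\tilde y,\tilde b)$ be an optimal solution. Then there exist $\tilde x^+\in\operatorname{conv}(\widetilde{\mathcal{A}}^+)$ and $\tilde x^-\in\operatorname{conv}(\widetilde{\mathcal{A}}^-)$ such that $\tilde y^\top(\tilde x^+-\tilde x^-)=\|\tilde x^+-\tilde x^-\|\,\|\tilde y\|_*$ and $\tilde d\,\|\tilde y\|_*=\tilde y^\top\tilde x^++\tilde b=-\tilde y^\top\tilde x^--\tilde b$; consequently $\tilde d=\|\tilde x^+-\tilde x^-\|/2$ and $\tilde b=-\tilde y^\top(\tilde x^++\tilde x^-)/2$. Furthermore, suppose the norm $\|\cdot\|$ and its dual are strictly convex. If $(\bar y,\bar b)$ satisfies $h(\bar y,\bar b;\widetilde{\mathcal{A}}^+,\widetilde{\mathcal{A}}^-)\ge\bar d>0$, then $\bar y^\top v(\tilde y)\ge \bar d/\tilde d>0$.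
   Context: $\|\cdot\|$ is a norm on $\mathbb{R}^d$ with dual norm $\|y\|_*=\max_{\|w\|\le1}y^\top w$. For $y\ne0$, $v(y)$ denotes a maximizer of $y^\top w$ over $\|w\|\le1$ (unique when $\|\cdot\|$ is strictly convex). Strict convexity of a norm $N$: $N(\beta w+(1-\beta)z)<\beta N(w)+(1-\beta)N(z)$ whenever $\beta\in(0,1)$ and $w,z$ are not collinear. Margin function: $h(y,b;\widetilde{\mathcal{A}}^+,\widetilde{\mathcal{A}}^-)=\min\{\min_{x\in\widetilde{\mathcal{A}}^+}(y^\top x+b),\ \min_{x\in\widetilde{\mathcal{A}}^-}(-y^\top x-b)\}$. *)

(* Defs.v *)
From HB Require Import structures.
From mathcomp Require Import all_boot all_order all_algebra.
From mathcomp Require Import all_classical all_reals all_analysis.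
Set Implicit Arguments. Unset Strict Implicit. Unset Printing Implicit Defensive.
Import Order.TTheory GRing.Theory Num.Theory.
Import numFieldTopology.Exports.
Local Open Scope classical_set_scope.
Local Open Scope ring_scope.

Section Defs.
Variables (R : realType) (d : nat).
Notation V := 'rV[R]_d.

Definition dot (y x : V) : R := \sum_(i < d) y ord0 i * x ord0 i.

Definition is_norm (N : V -> R) : Prop :=
  [/\ forall x, 0 <= N x,
      forall x, N x = 0 -> x = 0,
      forall (a : R) x, N (a *: x) = `|a| * N x
    & forall x y, N (x + y) <= N x + N y].

(* dual norm ||y||_* = max_{N w <= 1} y^T w (written as a sup; it is attained) *)
Definition dualnorm (N : V -> R) (y : V) : R :=
  sup [set dot y w | w in [set w : V | N w <= 1]].

(* w is a maximizer of y^T w over the unit ball of N (a choice of v(y)) *)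
Definition is_v (N : V -> R) (y w : V) : Prop :=
  N w <= 1 /\ dot y w = dualnorm N y.

Definition collinear (w z : V) : Prop :=
  exists a b : R, (a != 0 \/ b != 0) /\ a *: w + b *: z = 0.

Definition strictly_convex (N : V -> R) : Prop :=
  forall (beta : R) (w z : V), 0 < beta < 1 -> ~ collinear w z ->
    N (beta *: w + (1 - beta) *: z) < beta * N w + (1 - beta) * N z.

(* margin function h(y,b;A+,A-) (inf = min for compact nonempty sets) *)
Definition margin (y : V) (b : R) (Ap Am : set V) : R :=
  Num.min (inf [set dot y x + b | x in Ap]) (inf [set - dot y x - b | x in Am]).

Definition convhull (A : set V) : set V :=
  [set x | exists (n : nat) (lam : 'I_n -> R) (p : 'I_n -> V),
     [/\ forall i, 0 <= lam i, \sum_(i < n) lam i = 1,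
         forall i, A (p i) & x = \sum_(i < n) lam i *: p i]].

Definition linearly_separable (Ap Am : set V) : Prop :=
  exists (y : V) (b : R),
    (forall x, Ap x -> dot y x + b > 0) /\ (forall x, Am x -> dot y x + b < 0).

End Defs.

(* Main.v *)
Require Import Defs.
From HB Require Import structures.
From mathcomp Require Import all_boot all_order all_algebra.
From mathcomp Require Import all_classical all_reals all_analysis.
From mathcomp Require Import ring lra.
Import Order.TTheory GRing.Theory Num.Theory.
Import numFieldTopology.Exports.
Local Open Scope classical_set_scope.
Local Open Scope ring_scope.
Section Aux.
Variables (R : realType) (d : nat).
Local Notation V := 'rV[R]_d.
Implicit Types (x y z w a b : V).

Lemma dotDr y a b : dot y (a + b) = dot y a + dot y b.
Proof. by rewrite /dot -big_split; apply: eq_bigr => i _; rewrite mxE mulrDr. Qed.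
Lemma dotZr y (c : R) x : dot y (c *: x) = c * dot y x.
Proof. by rewrite /dot mulr_sumr; apply: eq_bigr => i _; rewrite mxE mulrCA. Qed.
Lemma dotZl (c : R) y x : dot (c *: y) x = c * dot y x.
Proof. by rewrite /dot mulr_sumr; apply: eq_bigr => i _; rewrite mxE mulrA. Qed.
Lemma dotNr y x : dot y (- x) = - dot y x.
Proof. by rewrite -scaleN1r dotZr mulN1r. Qed.
Lemma dotBr y a b : dot y (a - b) = dot y a - dot y b.
Proof. by rewrite dotDr dotNr. Qed.
Lemma dot0r y : dot y 0 = 0.
Proof. by rewrite /dot big1 // => i _; rewrite mxE mulr0. Qed.
Lemma dot_sumr y n (F : 'I_n -> V) : dot y (\sum_(i < n) F i) = \sum_(i < n) dot y (F i).
Proof.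
rewrite /dot; under eq_bigr do rewrite summxE mulr_sumr.
exact: exchange_big.
Qed.
Lemma dot_ge0 x : 0 <= dot x x.
Proof. by apply: sumr_ge0 => i _; rewrite -expr2 sqr_ge0. Qed.
Lemma dot_eq0 x : dot x x = 0 -> x = 0.
Proof.
move=> H; apply/rowP => i; rewrite mxE.
have := @psumr_eq0P _ _ xpredT (fun i => x ord0 i * x ord0 i)
  (fun j _ => ltac:(by rewrite /= -expr2 sqr_ge0)) H i isT.
by move/eqP; rewrite mulf_eq0 orbb => /eqP.
Qed.

Lemma coord_le x i : `|x ord0 i| <= `|x|.
Proof.
have /mapP[j Hj ->] : `|x ord0 i| \in [seq `|x k.1 k.2| | k : 'I_1 * 'I_d].
  by apply/mapP; exists (ord0, i) => //=; rewrite mem_enum.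
by rewrite [leRHS]/Num.Def.normr /= mx_normrE; apply/bigmax_geP; right => /=; exists j.
Qed.

Lemma dot_continuous y : continuous (dot y).
Proof.
rewrite /dot.
apply: (@continuous_big _ _ +%R 0 xpredT add_continuous) => i _.
move=> x; apply: continuousM; first exact: cst_continuous.
exact: coord_continuous.
Qed.

Lemma dotsq_continuous : continuous (fun x : V => dot x x).
Proof.
rewrite /dot.
apply: (@continuous_big _ _ +%R 0 xpredT add_continuous) => i _.
move=> x; apply: continuousM; exact: coord_continuous.
Qed.

Section Norm.
Variable N : V -> R.
Hypothesis hN : is_norm N.

Lemma N_ge0 x : 0 <= N x. Proof. by case: hN. Qed.
Lemma N_eq0 x : N x = 0 -> x = 0. Proof. by case: hN => _ H _ _; apply: H. Qed.
Lemma NZ (c : R) x : N (c *: x) = `|c| * N x. Proof. by case: hN. Qed.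
Lemma Ntri x y : N (x + y) <= N x + N y. Proof. by case: hN. Qed.
Lemma N0 : N 0 = 0. Proof. by have := NZ 0 0; rewrite scale0r normr0 mul0r. Qed.
Lemma NN x : N (- x) = N x. Proof. by rewrite -scaleN1r NZ normrN normr1 mul1r. Qed.
Lemma N_gt0 x : x != 0 -> 0 < N x.
Proof.
move=> x0; rewrite lt_neqAle N_ge0 andbT; apply/eqP => H.
by move/eqP: x0; apply; apply: N_eq0.
Qed.

Lemma N_sum n (F : 'I_n -> V) : N (\sum_(i < n) F i) <= \sum_(i < n) N (F i).
Proof.
elim/big_ind2: _ => //; first by rewrite N0.
by move=> a b c e H1 H2; apply: le_trans (Ntri _ _) _; exact: lerD.
Qed.

Lemma N_bound : exists K, 0 <= K /\ forall x, N x <= K * `|x|.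
Proof.
exists (\sum_(i < d) N 'e_i); split; first by apply: sumr_ge0 => i _; exact: N_ge0.
move=> x; rewrite {1}(row_sum_delta x).
apply: le_trans (N_sum _ _) _.
rewrite mulr_suml; apply: ler_sum => i _; rewrite NZ mulrC.
by apply: ler_wpM2l; [exact: N_ge0 | exact: coord_le].
Qed.

Lemma N_continuous : continuous N.
Proof.
have [K [K0 HK]] := N_bound.
move=> x; have FF : ProperFilter (nbhs x) := nbhs_pfilter x.
apply/cvgrPdist_lt => e e0.
have eK : 0 < e / (K + 1) by rewrite divr_gt0 // ltr_wpDl.
near=> t.
have Ht : `|x - t| < e / (K + 1).
  near: t; apply: filterS (nbhsx_ballx x _ eK) => t; by rewrite -ball_normE /ball_ /=.
have h1 := Ntri t (x - t); rewrite addrC subrK in h1.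
have h2 := Ntri x (t - x); rewrite addrC subrK in h2.
have h3 := HK (x - t). have h4 : N (t - x) = N (x - t) by rewrite -opprB NN.
have h5 : (K + 1) * `|x - t| < e by rewrite mulrC -ltr_pdivlMr // ltr_wpDl.
rewrite mulrDl mul1r in h5.
have h6 : 0 <= `|x - t| by [].
rewrite ltr_norml; apply/andP; split; lra.
Unshelve. all: by end_near.
Qed.

Lemma N_lower : exists c, 0 < c /\ forall x, c * `|x| <= N x.
Proof.
case: (pselect (exists x : V, x != 0)) => [[x0 x00]|H]; last first.
  exists 1; split => // x; have -> : x = 0.
    by apply/eqP; apply/negP => /negP x0; apply: H; exists x.
  by rewrite normr0 mulr0 N0.
pose S := [set x : V | `|x| = 1].
have S0 : S !=set0.
  exists (`|x0|^-1 *: x0); rewrite /S /= normrZ normfV normr_id mulVf //.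
  by rewrite normr_eq0.
have cS : compact S.
  apply: bounded_closed_compact.
    exists 1; split; first exact: num_real.
    by move=> M M1 y Sy /=; rewrite Sy ltW.
  have -> : S = [set x : V | `|x| <= 1] `&` [set x : V | 1 <= `|x|].
    by apply/seteqP; split => x /=; [move=> ->; rewrite lexx|move=> [? ?]; apply/eqP; rewrite eq_le; apply/andP].
  apply: closedI.
    exact: (continuous_closedP _).1 norm_continuous _ (@closed_le _ 1).
  exact: (continuous_closedP _).1 norm_continuous _ (@closed_ge _ 1).
have [z zS zmin] := EVT_min_rV S0 cS (continuous_subspaceT N_continuous).
have z0 : z != 0.
  by apply/eqP => z0; move: zS; rewrite inE /S /= z0 normr0 => /esym/eqP; rewrite oner_eq0.
exists (N z); split; first exact: N_gt0.
move=> x; have [->|x0'] := eqVneq x 0; first by rewrite normr0 mulr0 N0.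
have : N z <= N (`|x|^-1 *: x).
  apply: zmin; rewrite inE /S /= normrZ normfV normr_id mulVf //.
  by rewrite normr_eq0.
rewrite NZ normfV normr_id => H.
by rewrite -ler_pdivlMr ?normr_gt0 // mulrC.
Qed.

Lemma dot_le y w : dot y w <= (\sum_(i < d) `|y 0 i|) * `|w|.
Proof.
rewrite /dot mulr_suml; apply: ler_sum => i _.
apply: le_trans (ler_norm _) _; rewrite normrM.
by apply: ler_wpM2l => //; exact: coord_le.
Qed.

Lemma dual_hasub y : has_ubound [set dot y w | w in [set w | N w <= 1]].
Proof.
have [c [c0 Hc]] := N_lower.
exists ((\sum_(i < d) `|y 0 i|) / c) => _ [w Hw <-].
apply: le_trans (dot_le y w) _.
apply: ler_wpM2l; first by apply: sumr_ge0.
have H : c * `|w| <= 1 := le_trans (Hc w) Hw.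
by rewrite -(ler_pM2l c0) mulfV ?gt_eqF.
Qed.

Lemma dual_ub y w : N w <= 1 -> dot y w <= dualnorm N y.
Proof. by move=> Hw; apply: (ub_le_sup (dual_hasub y)); exists w. Qed.

Lemma dual_le y m : (forall w, N w <= 1 -> dot y w <= m) -> dualnorm N y <= m.
Proof.
move=> H; apply: ge_sup; last by move=> _ [w Hw <-]; exact: H.
by exists (dot y 0), 0 => //=; rewrite N0.
Qed.

Lemma dual_ge0 y : 0 <= dualnorm N y.
Proof. by have := dual_ub y 0; rewrite dot0r N0; apply. Qed.

Lemma dual_mul y w : dot y w <= dualnorm N y * N w.
Proof.
have [->|w0] := eqVneq w 0; first by rewrite dot0r N0 mulr0.
have Nw := N_gt0 _ w0.
have := dual_ub y ((N w)^-1 *: w).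
rewrite NZ dotZr ger0_norm ?invr_ge0 ?N_ge0 // mulVf ?gt_eqF // lexx => /(_ isT).
by rewrite mulrC ler_pdivrMr.
Qed.

Lemma margin_lep y (b : R) (A B : set V) x : compact A -> A x -> margin y b A B <= dot y x + b.
Proof.
move=> cA Ax; have A0 : A !=set0 by exists x.
have [a0 _ amin] := EVT_min_rV A0 cA (continuous_subspaceT (dot_continuous y)).
rewrite /margin ge_min; apply/orP; left.
apply: (ge_inf); last by exists x.
exists (dot y a0 + b) => _ [z Az <-]; rewrite lerD2r; by apply: amin; rewrite inE.
Qed.

Lemma margin_lem y (b : R) (A B : set V) x : compact B -> B x -> margin y b A B <= - dot y x - b.
Proof.
move=> cB Bx; have B0 : B !=set0 by exists x.
have [a0 _ amax] := EVT_max_rV B0 cB (continuous_subspaceT (dot_continuous y)).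
rewrite /margin ge_min; apply/orP; right.
apply: (ge_inf); last by exists x.
exists (- dot y a0 - b) => _ [z Az <-]; rewrite lerD2r lerN2; by apply: amax; rewrite inE.
Qed.

Lemma margin_ge y (b : R) (A B : set V) (m : R) : A !=set0 -> B !=set0 ->
  (forall x, A x -> m <= dot y x + b) -> (forall x, B x -> m <= - dot y x - b) ->
  m <= margin y b A B.
Proof.
move=> [a Aa] [c Bc] HA HB; rewrite /margin le_min; apply/andP; split.
  apply: lb_le_inf; first by exists (dot y a + b), a.
  by move=> _ [x Ax <-]; exact: HA.
apply: lb_le_inf; first by exists (- dot y c - b), c.
by move=> _ [x Ax <-]; exact: HB.
Qed.

Lemma conv_self (A : set V) x : A x -> convhull A x.
Proof.
move=> Ax; exists 1%N, (fun _ => 1), (fun _ => x); split => //.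
  by rewrite big_ord1.
by rewrite big_ord1 scale1r.
Qed.

Lemma conv_convex (A : set V) x z (t : R) : convhull A x -> convhull A z ->
  0 <= t <= 1 -> convhull A ((1 - t) *: x + t *: z).
Proof.
move=> [n1 [l1 [p1 [l1g s1 A1 ->]]]] [n2 [l2 [p2 [l2g s2 A2 ->]]]] /andP[t0 t1].
have E1 : forall i, @fintype.split n1 n2 (lshift n2 i) = inl i := fun i => unsplitK (inl i).
have E2 : forall i, @fintype.split n1 n2 (rshift n1 i) = inr i := fun i => unsplitK (inr i).
exists (n1 + n2)%N,
  (fun k => match @fintype.split n1 n2 k with inl i => (1 - t) * l1 i | inr j => t * l2 j end),
  (fun k => match @fintype.split n1 n2 k with inl i => p1 i | inr j => p2 j end).
split.
- move=> k; case: (@fintype.split n1 n2 k) => i; apply: mulr_ge0 => //; rewrite ?subr_ge0 //.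
- rewrite big_split_ord /=.
  rewrite (eq_bigr (fun i => (1 - t) * l1 i)); last by move=> i _; rewrite E1.
  rewrite [X in _ + X](eq_bigr (fun i => t * l2 i)); last by move=> i _; rewrite E2.
  by rewrite -!mulr_sumr s1 s2 !mulr1 subrK.
- by move=> k; case: (@fintype.split n1 n2 k).
- rewrite big_split_ord /= !scaler_sumr; congr (_ + _); apply: eq_bigr => i _.
    by rewrite E1 scalerA.
  by rewrite E2 scalerA.
Qed.

Lemma conv_dot (A : set V) y (m : R) x : (forall a, A a -> m <= dot y a) ->
  convhull A x -> m <= dot y x.
Proof.
move=> H [n [l [p [lg s Ap ->]]]].
rewrite dot_sumr; under eq_bigr do rewrite dotZr.
rewrite -[m]mul1r -s mulr_suml; apply: ler_sum => i _.
by apply: ler_wpM2l => //; exact: H.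
Qed.

Lemma conv_dotb (A : set V) y (b m : R) x : (forall a, A a -> m <= dot y a + b) ->
  convhull A x -> m <= dot y x + b.
Proof.
move=> H Hx; rewrite -lerBlDr; apply: (@conv_dot A y (m - b) x _ Hx) => a Aa.
by rewrite lerBlDr; exact: H.
Qed.
Lemma fst_cont (T U : topologicalType) : continuous (@fst T U).
Proof. move=> z; exact: cvg_fst. Qed.
Lemma snd_cont (T U : topologicalType) : continuous (@snd T U).
Proof. move=> z; exact: cvg_snd. Qed.

Definition cvf (z : (R * V) * V) : V := (1 - z.1.1) *: z.1.2 + z.1.1 *: z.2.

Lemma cvf_cont : continuous cvf.
Proof.
move=> z; apply: cvgD; apply: cvgZ.
- apply: cvgB; first exact: cvg_cst.
  exact: (continuous_comp (@fst_cont _ _ z) (@fst_cont _ _ _)).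
- exact: (continuous_comp (@fst_cont _ _ z) (@snd_cont _ _ _)).
- exact: (continuous_comp (@fst_cont _ _ z) (@fst_cont _ _ _)).
- exact: snd_cont.
Qed.

Fixpoint cvn (A : set V) (n : nat) : set V :=
  if n is n'.+1 then [set cvf z | z in (`[0, 1]%classic `*` cvn A n') `*` A] else A.

Lemma cvn_compact (A : set V) n : compact A -> compact (cvn A n).
Proof.
move=> cA; elim: n => [//|n IH] /=.
apply: continuous_compact; first exact: continuous_subspaceT cvf_cont.
apply: compact_setX => //; apply: compact_setX => //; exact: segment_compact.
Qed.

Lemma cvn_sub (A : set V) n : cvn A n `<=` convhull A.
Proof.
elim: n => [|n IH] x /=; first exact: conv_self.
move=> [[[t y] a] [[/= t01 Hy] Aa] <-]; rewrite /cvf /=.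
apply: conv_convex; [exact: IH|exact: conv_self|].
by move: t01; rewrite /= in_itv /=.
Qed.

Lemma cvn_mono (A : set V) n : A !=set0 -> cvn A n `<=` cvn A n.+1.
Proof.
move=> [a Aa] x Hx /=; exists ((0, x), a).
  by split => //; split => //=; rewrite in_itv /= lexx ler01.
by rewrite /cvf /= subr0 scale1r scale0r addr0.
Qed.

Lemma cvn_le (A : set V) m n : A !=set0 -> (m <= n)%N -> cvn A m `<=` cvn A n.
Proof.
move=> A0; elim: n => [|n IH]; first by rewrite leqn0 => /eqP ->.
rewrite leq_eqVlt => /orP[/eqP -> //|]; rewrite ltnS => /IH H.
by move=> x /H; exact: cvn_mono.
Qed.

Definition comb (A : set V) n (l : 'I_n -> R) (p : 'I_n -> V) x :=
  [/\ forall i, 0 <= l i, \sum_(i < n) l i = 1, forall i, A (p i)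
    & x = \sum_(i < n) l i *: p i].
Arguments comb A [n] l p x.

Lemma comb_cvn (A : set V) k : forall (l : 'I_k.+1 -> R) p x, comb A l p x -> cvn A k x.
Proof.
elim: k => [|k IH] l p x [lg s Ap ->].
  by rewrite big_ord1; rewrite big_ord1 in s; rewrite s scale1r.
have A0 : A !=set0 by exists (p ord0).
rewrite big_ord_recr /=; rewrite big_ord_recr /= in s.
set t := l ord_max in s *.
have rest0 : 0 <= \sum_(i < k.+1) l (widen_ord (leqnSn k.+1) i) by apply: sumr_ge0.
have t1 : t <= 1 by rewrite -s lerDr.
have [t1'|t1'] := eqVneq t 1.
  have H0 : \sum_(i < k.+1) l (widen_ord (leqnSn k.+1) i) = 0 by rewrite t1' in s; lra.
  rewrite big1; last first.
    by move=> i _; rewrite (psumr_eq0P (fun i _ => lg _) H0) // scale0r.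
  rewrite add0r; exists ((1, p ord0), p ord_max).
    split; [split => /=|exact: Ap]; first by rewrite in_itv /= ler01 lexx.
    by apply: (@cvn_le A 0 k A0 (leq0n k)); exact: Ap.
  by rewrite /cvf /= subrr scale0r add0r t1'.
have t1s : 0 < 1 - t by rewrite subr_gt0 lt_neqAle t1' t1.
pose y := \sum_(i < k.+1) (l (widen_ord (leqnSn k.+1) i) / (1 - t)) *: p (widen_ord (leqnSn k.+1) i).
have Hy : cvn A k y.
  apply: (IH (fun i => l (widen_ord (leqnSn k.+1) i) / (1 - t))
             (fun i => p (widen_ord (leqnSn k.+1) i))).
  split => //.
  - by move=> i; apply: divr_ge0 => //; exact: ltW.
  - have Hs : \sum_(i < k.+1) l (widen_ord (leqnSn k.+1) i) = 1 - t by lra.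
    by rewrite -mulr_suml Hs mulfV // gt_eqF.
exists ((t, y), p ord_max).
  split; [split => //=|exact: Ap]; rewrite in_itv /= t1 andbT; exact: lg.
rewrite /cvf /=; congr (_ + _).
rewrite /y scaler_sumr; apply: eq_bigr => i _; rewrite scalerA; congr (_ *: _).
by rewrite mulrCA mulfV ?mulr1 // gt_eqF.
Qed.

Lemma comb_drop (A : set V) n (l : 'I_n.+1 -> R) p x j : l j = 0 -> comb A l p x ->
  comb A (fun i => l (lift j i)) (fun i => p (lift j i)) x.
Proof.
move=> lj [lg s Ap ->]; split => //.
  by rewrite (bigD1_ord j) //= lj add0r in s.
by rewrite (bigD1_ord j) //= lj scale0r add0r.
Qed.

Lemma dep_exists n (p : 'I_n.+1 -> V) : (d < n)%N ->
  exists mu : 'I_n.+1 -> R, [/\ exists i, mu i != 0, \sum_(i < n.+1) mu i = 0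
     & \sum_(i < n.+1) mu i *: p i = 0].
Proof.
move=> dn.
pose M : 'M[R]_(n.+1, d + 1) := \matrix_(i < n.+1) row_mx (p i) (1 : 'rV[R]_1).
have rk : (0 < \rank (kermx M))%N.
  rewrite mxrank_ker; have h := rank_leq_col M.
  by rewrite subn_gt0; apply: (leq_ltn_trans h); rewrite addn1 ltnS.
have : kermx M != 0 by rewrite -mxrank_eq0 -lt0n.
have [i0 Hi0] : exists i0, row i0 (kermx M) != 0.
  case: (pselect (exists i0, row i0 (kermx M) != 0)) => [//|H].
  suff K0 : kermx M = 0 by move: rk; rewrite K0 mxrank0.
  apply/row_matrixP => i; rewrite row0.
  by case: (eqVneq (row i (kermx M)) 0) => // Hi; exfalso; apply: H; exists i.
move=> _.
set u := row i0 (kermx M) in Hi0.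
have ME : forall i k, M i k = (row_mx (p i) (1 : 'rV[R]_1)) 0 k.
  by move=> i k; rewrite mxE.
have uM : u *m M = 0 by rewrite /u -row_mul mulmx_ker row0.
exists (fun i => u 0 i); split.
- case: (pselect (exists i, u 0 i != 0)) => [//|H].
  case/negP: Hi0; apply/eqP/rowP => i; rewrite [RHS]mxE.
  by apply/eqP/negPn/negP => Hi; apply: H; exists i.
- have := congr1 (fun A : 'M[R]_(1, d + 1) => A 0 (rshift d (ord0 : 'I_1))) uM.
  rewrite !mxE /= => H; rewrite -[RHS]H; apply: eq_bigr => i _.
  by rewrite ME row_mxEr [X in _ * X]mxE /= mulr1.
- apply/rowP => j; rewrite summxE mxE.
  have := congr1 (fun A : 'M[R]_(1, d + 1) => A 0 (lshift 1 j)) uM.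
  rewrite !mxE /= => H; rewrite -[RHS]H; apply: eq_bigr => i _.
  by rewrite ME row_mxEl mxE.
Qed.
Lemma car (A : set V) n (l : 'I_n.+1 -> R) p x : (d < n)%N -> comb A l p x ->
  exists l' p', @comb A n l' p' x.
Proof.
move=> dn H; case: (H) => lg s Ap xE.
case: (pselect (exists j, l j = 0)) => [[j lj]|Hl].
  by exists (fun i => l (lift j i)), (fun i => p (lift j i)); exact: comb_drop.
have lpos : forall i, 0 < l i.
  by move=> i; rewrite lt_neqAle lg andbT eq_sym; apply/eqP => li; apply: Hl; exists i.
have [mu [[i1 mu1] smu pmu]] := @dep_exists n p dn.
have [i2 mu2] : exists i, 0 < mu i.
  case: (pselect (exists i, 0 < mu i)) => [//|Hm].
  exfalso; have Hle : forall i, 0 <= - mu i.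
    by move=> k; rewrite oppr_ge0 leNgt; apply/negP => h; apply: Hm; exists k.
  have : \sum_i - mu i = 0 by rewrite sumrN smu oppr0.
  move/(psumr_eq0P (fun i _ => Hle i)) => /(_ i1 isT) /eqP.
  by rewrite oppr_eq0 (negbTE mu1).
case: (@arg_maxP _ _ _ i2 xpredT (fun i => mu i / l i) isT) => j _ Hj.
set sj := mu j / l j in Hj.
have s0 : 0 < sj := lt_le_trans (divr_gt0 mu2 (lpos i2)) (Hj i2 isT).
have muj : mu j != 0.
  by apply/eqP => mj; move: s0; rewrite /sj mj mul0r ltxx.
pose l2 i := l i - mu i / sj.
have l2j : l2 j = 0.
  by rewrite /l2 /sj invf_div mulrCA mulfV // mulr1 subrr.
have Hc : comb A l2 p x.
  split => //.
  - move=> i; rewrite /l2 subr_ge0 (ler_pdivrMr _ _ s0) mulrC.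
    have Hji : mu i / l i <= sj := Hj i isT.
    by rewrite (ler_pdivrMr _ _ (lpos i)) in Hji.
  - by rewrite /l2 sumrB s -mulr_suml smu mul0r subr0.
  - rewrite xE [RHS](eq_bigr (fun i => l i *: p i - (mu i / sj) *: p i)); last first.
      by move=> i _; rewrite /l2 scalerBl.
    rewrite sumrB; under [X in _ - X]eq_bigr do rewrite mulrC -scalerA.
    by rewrite -scaler_sumr pmu scaler0 subr0.
by exists (fun i => l2 (lift j i)), (fun i => p (lift j i)); exact: comb_drop.
Qed.

Lemma comb_small (A : set V) n (l : 'I_n -> R) p x : comb A l p x ->
  exists k, (k <= d)%N /\ exists l' p', @comb A k.+1 l' p' x.
Proof.
move: n l p; elim/ltn_ind => n IH l p H.
case: n IH l p H => [|n] IH l p H.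
  by case: H => _ s _ _; move: s; rewrite big_ord0 => /eqP; rewrite eq_sym oner_eq0.
case: (leqP n d) => hn; first by exists n; split => //; exists l, p.
have [l' [p' H']] := @car A n l p x hn H.
exact: (IH n (ltnSn n) l' p' H').
Qed.

Lemma conv_cvn (A : set V) : A !=set0 -> convhull A `<=` cvn A d.
Proof.
move=> A0 x [n [l [p H]]].
have [k [kd [l' [p' H']]]] := @comb_small A n l p x H.
by apply: (@cvn_le A k d A0 kd); exact: comb_cvn H'.
Qed.

Lemma conv_compact (A : set V) : A !=set0 -> compact A -> compact (convhull A).
Proof.
move=> A0 cA.
have -> : convhull A = cvn A d.
  by apply/seteqP; split; [exact: conv_cvn | exact: cvn_sub].
exact: cvn_compact.
Qed.
Lemma dotC x y : dot x y = dot y x.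
Proof. by rewrite /dot; apply: eq_bigr => i _; rewrite mulrC. Qed.
Lemma dotDl a b x : dot (a + b) x = dot a x + dot b x.
Proof. by rewrite dotC dotDr !(dotC x). Qed.

Lemma diff_compact (A B : set V) : compact A -> compact B ->
  compact [set z.1 - z.2 | z in A `*` B].
Proof.
move=> cA cB; apply: continuous_compact; last exact: compact_setX.
apply: continuous_subspaceT => z; exact: sub_continuous.
Qed.

Lemma ball_compact r : compact [set w | N w <= r].
Proof.
have [c [c0 Hc]] := N_lower.
apply: bounded_closed_compact.
  exists (r / c); split; first exact: num_real.
  move=> M HM w /= Hw; apply: ltW; apply: le_lt_trans HM.
  by rewrite ler_pdivlMr // mulrC; exact: le_trans (Hc w) Hw.
exact: (continuous_closedP _).1 N_continuous _ (@closed_le _ r).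
Qed.

Lemma VI (M : set V) p :
  (forall z1 z2 t, M z1 -> M z2 -> 0 <= t <= 1 -> M ((1 - t) *: z1 + t *: z2)) ->
  M p -> (forall z, M z -> dot p p <= dot z z) ->
  forall z, M z -> dot p p <= dot p z.
Proof.
move=> cvx Mp pmin z Mz.
set q := z - p.
have zq : z = p + q by rewrite /q addrC subrK.
rewrite zq dotDr lerDl.
set X := dot p q; set Q := dot q q.
have Q0 : 0 <= Q := dot_ge0 q.
rewrite leNgt; apply/negP => X0.
pose t := - X / (Q - X).
have QX : 0 < Q - X by lra.
have t0 : 0 < t by rewrite /t divr_gt0 // oppr_gt0.
have t1 : t <= 1 by rewrite /t ler_pdivrMr // mul1r; lra.
have et : t * (Q - X) = - X by rewrite /t mulrAC -mulrA mulfV ?mulr1 // gt_eqF.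
have Ht : 0 <= t <= 1 by rewrite (ltW t0) t1.
have := pmin _ (cvx p z t Mp Mz Ht).
have -> : (1 - t) *: p + t *: z = p + t *: q.
  by rewrite zq scalerDr scalerBl scale1r addrA subrK.
rewrite dotDl !dotDr !dotZl !dotZr (dotC q p) -/X -/Q => H.
have etQ : t * Q = - X + t * X by rewrite -et; ring.
have : 0 <= t * X + (t * X + t * (t * Q)) by lra.
rewrite etQ => H2.
have : t * X < 0 by rewrite pmulr_rlt0.
nra.
Qed.
Lemma conv_dotm (A : set V) y (b m : R) x : (forall a, A a -> m <= - dot y a - b) ->
  convhull A x -> m <= - dot y x - b.
Proof.
move=> H Hx.
have := @conv_dotb A ((-1) *: y) (- b) m x; rewrite dotZl mulN1r; apply => //.
by move=> a Aa; rewrite dotZl mulN1r; exact: H.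
Qed.

Lemma conv_dec (Ap Am : set V) z : convhull [set z.1 - z.2 | z in Ap `*` Am] z ->
  exists xp xm, [/\ convhull Ap xp, convhull Am xm & z = xp - xm].
Proof.
move=> [n [l [p [lg s Hp ->]]]].
have : forall i, exists am : V * V, Ap am.1 /\ Am am.2 /\ p i = am.1 - am.2.
  by move=> i; have [[a m] [/= Aa Am'] <-] := Hp i; exists (a, m).
case/choice => f Hf.
exists (\sum_(i < n) l i *: (f i).1), (\sum_(i < n) l i *: (f i).2); split.
- by exists n, l, (fun i => (f i).1); split => // i; case: (Hf i).
- by exists n, l, (fun i => (f i).2); split => // i; case: (Hf i) => _ [].
- rewrite -sumrB; apply: eq_bigr => i _; case: (Hf i) => _ [_ ->].
  by rewrite scalerBr.
Qed.

Lemma part1 (Ap Am : set V) yt (bt : R) : compact Ap -> compact Am -> Ap !=set0 -> Am !=set0 ->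
  (forall y (b : R), dualnorm N y <= 1 -> margin y b Ap Am <= margin yt bt Ap Am) ->
  0 < margin yt bt Ap Am ->
  exists xp xm, [/\ convhull Ap xp, convhull Am xm & N (xp - xm) <= 2 * margin yt bt Ap Am].
Proof.
move=> cAp cAm [a0 Aa0] [m0 Am0] opt dt0.
set dt := margin yt bt Ap Am in opt dt0 *.
pose E := [set z.1 - z.2 | z in Ap `*` Am].
have cE : compact E by exact: diff_compact.
have E0 : E !=set0 by exists (a0 - m0), (a0, m0).
have cCE : compact (convhull E) := @conv_compact E E0 cE.
have CE0 : convhull E !=set0 by have [e Ee] := E0; exists e; exact: conv_self.
have [x0 x0C x0min] := EVT_min_rV CE0 cCE (continuous_subspaceT N_continuous).
have x0C' : convhull E x0 by rewrite inE in x0C.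
have [xp [xm [Hp Hm x0E]]] := @conv_dec Ap Am x0 x0C'.
exists xp, xm; split => //.
rewrite -x0E leNgt; apply/negP => HD.
set D := N x0 in HD.
have Dmin : forall e, convhull E e -> D <= N e by move=> e He; apply: x0min; rewrite inE.
pose r := (2 * dt + D) / 2.
have r1 : 2 * dt < r by rewrite /r; lra.
have r2 : r < D by rewrite /r; lra.
have r0 : 0 < r by lra.
pose B := [set w | N w <= r].
have cB : compact B := ball_compact r.
pose M := [set z.1 - z.2 | z in convhull E `*` B].
have cM : compact M by exact: diff_compact.
have M0 : M !=set0.
  by exists (x0 - 0), (x0, 0) => //; split => //; rewrite /B /= N0 ltW.
have cvx : forall z1 z2 t, M z1 -> M z2 -> 0 <= t <= 1 -> M ((1 - t) *: z1 + t *: z2).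
  move=> _ _ t [[e1 w1] [/= He1 Hw1] <-] [[e2 w2] [/= He2 Hw2] <-] /andP[t0 t1].
  exists ((1 - t) *: e1 + t *: e2, (1 - t) *: w1 + t *: w2).
    split => /=; first by apply: conv_convex => //; rewrite t0 t1.
    apply: le_trans (Ntri _ _) _; rewrite !NZ ger0_norm ?subr_ge0 // ger0_norm //.
    have h1 : (1 - t) * N w1 <= (1 - t) * r by apply: ler_wpM2l; rewrite ?subr_ge0.
    have h2 : t * N w2 <= t * r by apply: ler_wpM2l.
    rewrite /B /= in Hw1 Hw2 *; lra.
  by rewrite /= !scalerBr opprD !addrA; congr (_ - _); rewrite addrAC.
have [p pM pmin] := EVT_min_rV M0 cM (continuous_subspaceT dotsq_continuous).
have pM' : M p by rewrite inE in pM.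
have VIp := @VI M p cvx pM' (fun z Mz => pmin z (mem_set Mz)).
have p0 : p != 0.
  apply/eqP => p0; move: pM'; rewrite p0 => -[[e w] [/= He Hw] /eqP].
  rewrite subr_eq0 => /eqP ew; have := Dmin e He; rewrite ew; rewrite /B /= in Hw; lra.
have pp0 : 0 < dot p p.
  rewrite lt_neqAle dot_ge0 andbT; apply/eqP => H; move/eqP: p0; apply.
  exact: dot_eq0.
have key : forall e w, E e -> N w <= r -> dot p w < dot p e.
  move=> e w Ee Hw; have := VIp (e - w).
  have : M (e - w) by exists (e, w) => //; split => //=; exact: conv_self.
  move=> /[swap] /[apply]; rewrite dotBr; lra.
set s := dualnorm N p.
have s0 : 0 < s.
  have Np := N_gt0 _ p0.
  have := dual_ub p ((N p)^-1 *: p).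
  rewrite NZ ger0_norm ?invr_ge0 ?N_ge0 // mulVf ?gt_eqF // lexx => /(_ isT).
  by rewrite dotZr; apply: lt_le_trans; rewrite mulr_gt0 // invr_gt0.
have keys : forall e, E e -> r * s <= dot p e.
  move=> e Ee; rewrite mulrC -ler_pdivlMr //; apply: dual_le => w Hw.
  rewrite ler_pdivlMr // mulrC -dotZr; apply: ltW; apply: key => //.
  by rewrite NZ ger0_norm ?(ltW r0) // -[leRHS]mulr1 ler_wpM2l // ltW.
pose y := s^-1 *: p.
have dy : dualnorm N y <= 1.
  apply: dual_le => w Hw; rewrite /y dotZl -[leRHS](mulVf (lt0r_neq0 s0)).
  by apply: ler_wpM2l; [rewrite invr_ge0 ltW | exact: dual_ub].
have ysep : forall a m, Ap a -> Am m -> r <= dot y a - dot y m.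
  move=> a m Aa Am'; rewrite -dotBr /y dotZl.
  rewrite -ler_pdivrMl ?invr_gt0 // invrK mulrC; apply: keys.
  by exists (a, m).
have Ap0 : Ap !=set0 by exists a0.
have [a1 a1A a1min] := EVT_min_rV Ap0 cAp (continuous_subspaceT (dot_continuous y)).
have a1A' : Ap a1 by rewrite inE in a1A.
pose b := - dot y a1 + r / 2.
have : r / 2 <= margin y b Ap Am.
  apply: margin_ge; [by exists a0 | by exists m0 | |].
    move=> x Ax; have := a1min x (mem_set Ax); rewrite /b; lra.
  move=> x Ax; have := ysep a1 x a1A' Ax; rewrite /b; lra.
have := opt y b dy; lra.
Qed.
Lemma main_sec (Ap Am : set V) (yt : V) (bt : R) :
  compact Ap -> compact Am -> Ap !=set0 -> Am !=set0 ->
  linearly_separable Ap Am ->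
  dualnorm N yt <= 1 ->
  (forall (y : V) (b : R), dualnorm N y <= 1 ->
     margin y b Ap Am <= margin yt bt Ap Am) ->
  0 < margin yt bt Ap Am ->
  (exists xp xm : V,
     [/\ convhull Ap xp, convhull Am xm &
       [/\ dot yt (xp - xm) = N (xp - xm) * dualnorm N yt,
         margin yt bt Ap Am * dualnorm N yt = dot yt xp + bt,
         margin yt bt Ap Am * dualnorm N yt = - dot yt xm - bt,
         margin yt bt Ap Am = N (xp - xm) / 2
       & bt = - dot yt (xp + xm) / 2]])
  /\
  (strictly_convex N -> strictly_convex (dualnorm N) ->
   forall (yb : V) (bb db : R),
     0 < db -> db <= margin yb bb Ap Am ->
     forall v : V, is_v N yt v ->
       db / margin yt bt Ap Am <= dot yb v /\ 0 < db / margin yt bt Ap Am).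
Proof.
move=> cAp cAm Ap0 Am0 _ dyt opt dt0.
have [xp [xm [Hp Hm HN]]] := @part1 Ap Am yt bt cAp cAm Ap0 Am0 opt dt0.
set dt := margin yt bt Ap Am in opt dt0 HN *.
have h1 : dt <= dot yt xp + bt.
  by apply: (@conv_dotb Ap yt bt dt xp _ Hp) => a Aa; exact: margin_lep.
have h2 : dt <= - dot yt xm - bt.
  by apply: (@conv_dotm Am yt bt dt xm _ Hm) => a Aa; exact: margin_lem.
set D := N (xp - xm) in HN *.
set s := dualnorm N yt in dyt *.
have h3 : dot yt (xp - xm) <= s * D := dual_mul yt (xp - xm).
have D0 : 0 <= D := N_ge0 _.
have s0 : 0 <= s := dual_ge0 yt.
have h4 : s * D <= D by rewrite -[leRHS]mul1r; exact: ler_wpM2r.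
rewrite dotBr in h3.
have eD : D = 2 * dt by lra.
have eY : dot yt xp - dot yt xm = D by lra.
have es : s = 1.
  have : (s - 1) * D = 0 by rewrite mulrBl mul1r; lra.
  move/eqP; rewrite mulf_eq0 => /orP[/eqP|/eqP]; first by move=> H; lra.
  by move=> H; lra.
have e1 : dt = dot yt xp + bt by lra.
have e2 : dt = - dot yt xm - bt by lra.
split.
  exists xp, xm; split => //; rewrite es !mulr1; split => //.
  - by rewrite dotBr.
  - by rewrite -/D eD; field.
  - by rewrite dotDr; lra.
move=> hsc _ yb bb db db0 dbm v [Nv dv].
rewrite -/s es in dv.
have Dp : 0 < D by lra.
pose u := D^-1 *: (xp - xm).
have Nu : N u = 1 by rewrite /u NZ ger0_norm ?invr_ge0 // mulVf // gt_eqF.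
have du : dot yt u = 1 by rewrite /u dotZr dotBr eY mulVf // gt_eqF.
have vu : v = u.
  case: (pselect (collinear v u)) => [[a [b [ab0 Hab]]]|Hnc].
    have : dot yt (a *: v + b *: u) = 0 by rewrite Hab dot0r.
    rewrite dotDr (dotZr yt a v) (dotZr yt b u) dv du !mulr1 => hab.
    have a0 : a != 0.
      case: (eqVneq a 0) => [a0|//].
      case: ab0 => [|/negP Hb]; first by rewrite a0 eqxx.
      by exfalso; apply: Hb; apply/eqP; lra.
    have : a *: (v - u) = 0.
      have nab : - a = b by lra.
      by rewrite scalerBr -scaleNr nab Hab.
    move/eqP; rewrite scaler_eq0 (negbTE a0) /= subr_eq0 => /eqP //.
  exfalso.
  have h12 : 0 < (1 / 2 : R) < 1.
    have k1 : (0:R) < 1 / 2 by lra.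
    have k2 : (1:R) / 2 < 1 by lra.
    by rewrite k1 k2.
  have := hsc (1 / 2) v u h12 Hnc.
  set z := _ + _ => Hz.
  have dz : dot yt z = 1.
    by rewrite /z dotDr (dotZr yt _ v) (dotZr yt _ u) dv du; field.
  have Nz1 : N z < 1 by lra.
  have z0 : z != 0 by apply/eqP => z0; move: dz; rewrite z0 dot0r => /eqP; rewrite eq_sym oner_eq0.
  have Nz0 := N_gt0 _ z0.
  have := dual_ub yt ((N z)^-1 *: z).
  rewrite NZ ger0_norm ?invr_ge0 ?N_ge0 // mulVf ?gt_eqF // lexx => /(_ isT).
  rewrite dotZr dz mulr1 -/s es invf_le1 //; lra.
have g1 : db <= dot yb xp + bb.
  apply: (@conv_dotb Ap yb bb db xp _ Hp) => a Aa; apply: le_trans dbm _; exact: margin_lep.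
have g2 : db <= - dot yb xm - bb.
  apply: (@conv_dotm Am yb bb db xm _ Hm) => a Aa; apply: le_trans dbm _; exact: margin_lem.
rewrite vu /u dotZr dotBr; split; last exact: divr_gt0.
rewrite [X in _ <= X]mulrC ler_pdivlMr // (_ : db / dt * D = 2 * db); first lra.
by rewrite eD; field; exact: lt0r_neq0.
Qed.

End Norm.
End Aux.

Theorem mainTheorem5 (R : realType) (d : nat) (N : 'rV[R]_d -> R)
  (Ap Am : set 'rV[R]_d) (yt : 'rV[R]_d) (bt : R) :
  is_norm N ->
  compact Ap -> compact Am -> Ap !=set0 -> Am !=set0 ->
  linearly_separable Ap Am ->
  (* (yt, bt) is an optimal solution of max_{||y||_* <= 1, b} h(y,b) *)
  dualnorm N yt <= 1 ->
  (forall (y : 'rV[R]_d) (b : R), dualnorm N y <= 1 ->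
     margin y b Ap Am <= margin yt bt Ap Am) ->
  (* d~ := margin yt bt Ap Am > 0 *)
  0 < margin yt bt Ap Am ->
  (exists xp xm : 'rV[R]_d,
     [/\ convhull Ap xp, convhull Am xm &
       [/\ dot yt (xp - xm) = N (xp - xm) * dualnorm N yt,
         margin yt bt Ap Am * dualnorm N yt = dot yt xp + bt,
         margin yt bt Ap Am * dualnorm N yt = - dot yt xm - bt,
         margin yt bt Ap Am = N (xp - xm) / 2
       & bt = - dot yt (xp + xm) / 2]])
  /\
  (strictly_convex N -> strictly_convex (dualnorm N) ->
   forall (yb : 'rV[R]_d) (bb db : R),
     0 < db -> db <= margin yb bb Ap Am ->
     forall v : 'rV[R]_d, is_v N yt v ->
       db / margin yt bt Ap Am <= dot yb v /\ 0 < db / margin yt bt Ap Am).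
Proof. move=> hN; exact: (@main_sec R d N hN Ap Am yt bt). Qed.
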